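(* Under the standing assumptions with $d\ge1$, the following hold on $V$: (i) $E^*_0AE^*_0=a_0E^*_0$, where $a_0=\theta_0+\zeta_1(\theta^*_0-\theta^*_1)^{-1}$; (ii) $E_dA^*E_d=a^*_dE_d$, where $a^*_d=\theta^*_1-\dfrac{\zeta_1+(\theta^*_0-\theta^*_1)(\theta_0-\theta_{d-1})}{\theta_{d-1}-\theta_d}$.
   Context: Let $\mathbb F$ be an algebraically closed field, $d\ge0$, and $q,a,b,c,a^*,b^*,c^*\in\mathbb F$ with $q,b,c,b^*,c^*$ nonzero and $q^2\ne\pm1$. Put $\theta_i=a+bq^{2i-d}+cq^{d-2i}$ and $\theta^*_i=a^*+b^*q^{2i-d}+c^*q^{d-2i}$ ($0\le i\le d$), and assume $\theta_0,\dots,\theta_d$ are mutually distinct and $\theta^*_0,\dots,\theta^*_d$ are mutually distinct (this forces $q^{2i}\ne1$ for $1\le i\le d$). $U_q(\widehat{\mathfrak{sl}}_2)$ is the associative unital $\mathbb F$-algebra with generators $e_i^{\pm},K_i^{\pm1}$ ($i\in\{0,1\}$) and relations $K_iK_i^{-1}=K_i^{-1}K_i=1$, $K_0K_1=K_1K_0$, $K_ie_i^{\pm}K_i^{-1}=q^{\pm2}e_i^{\pm}$, $K_ie_j^{\pm}K_i^{-1}=q^{\mp2}e_j^{\pm}$ ($i\ne j$), $e_i^+e_i^--e_i^-e_i^+=(K_i-K_i^{-1})/(q-q^{-1})$, $e_0^{\pm}e_1^{\mp}=e_1^{\mp}e_0^{\pm}$, and the $q$-Serre relations $(e_i^\pm)^3e_j^\pm-[3]_q(e_i^\pm)^2e_j^\pm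 e_i^\pm+[3]_qe_i^\pm e_j^\pm(e_i^\pm)^2-e_j^\pm(e_i^\pm)^3=0$ ($i\ne j$), where $[3]_q=q^2+1+q^{-2}$. Tensor products of modules are formed via $e_i^+(v\otimes w)=e_i^+v\otimes K_iw+v\otimes e_i^+w$, $e_i^-(v\otimes w)=e_i^-v\otimes w+K_i^{-1}v\otimes e_i^-w$, $K_i(v\otimes w)=K_iv\otimes K_iw$. For nonzero $\alpha\in\mathbb F$, $V(\alpha)$ is the module with basis $x,y$ and $K_1x=qx$, $K_1y=q^{-1}y$, $e_1^-x=y$, $e_1^-y=0$, $e_1^+x=0$, $e_1^+y=x$, $K_0x=q^{-1}x$, $K_0y=qy$, $e_0^-x=0$, $e_0^-y=q\alpha^{-1}x$, $e_0^+x=q^{-1}\alpha y$, $e_0^+y=0$. $V=V(\alpha_1)\otimes\cdots\otimes V(\alpha_d)$ with nonzero $\alpha_i\in\mathbb F$. $U_0$ is the $1$-dimensional span of $x\otimes\cdots\otimes x$. Fix $u,v,u^*,v^*\in\mathbb F$ with $uv^*=-bb^*q^{-1}(q-q^{-1})^2$, $vu^*=-cc^*q^{-1}(q-q^{-1})^2$; set $R=ue_0^++ve_1^-K_1$, $L=u^*e_1^++v^*e_0^-K_0$, $A=a1+bK_0+cK_1+R$, $A^*=a^*1+b^*K_0+c^*K_1+L$, and $E_i=\prod_{0\le j\le d,\,j\ne i}(A-\theta_j1)/(\theta_i-\theta_j)$, $E^*_i=\prod_{0\le j\le d,\,j\ne i}(A^*-\theta^*_j1)/(\theta^*_i-\theta^*_j)$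 in $U_q(\widehat{\mathfrak{sl}}_2)$. $\zeta_1$ denotes the scalar by which $LR$ acts on $U_0$. *)

(* Defs.v *)
From HB Require Import structures.
From mathcomp Require Import all_boot all_order all_algebra.
Set Implicit Arguments. Unset Strict Implicit. Unset Printing Implicit Defensive.
Import Order.TTheory GRing.Theory Num.Theory.
Local Open Scope ring_scope.

(* Kronecker product of the 2x2 matrix [[a, b]; [c, d]] (rows = output
   coordinates, basis order x, y) with a square matrix B:
   (A (x) B) = block matrix [[a B, b B]; [c B, d B]]. *)
Definition kron2 (F : fieldType) n (a b c d : F) (B : 'M[F]_n) : 'M[F]_(n + n) :=
  block_mx (a *: B) (b *: B) (c *: B) (d *: B).

Section Uq.
Variables (F : fieldType) (q : F).

(* V(alpha_1) (x) ... (x) V(alpha_d) (x) F, F the trivial 1-dim module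
   (e_i^{+-} = 0, K_i = 1); the last factor is harmless. *)
Fixpoint dimV (s : seq F) : nat := if s is _ :: s' then (dimV s' + dimV s')%N else 1%N.

Fixpoint K0m (s : seq F) : 'M[F]_(dimV s) :=
  match s return 'M[F]_(dimV s) with
  | [::] => 1%:M
  | _ :: s' => kron2 q^-1 0 0 q (K0m s')
  end.

Fixpoint K1m (s : seq F) : 'M[F]_(dimV s) :=
  match s return 'M[F]_(dimV s) with
  | [::] => 1%:M
  | _ :: s' => kron2 q 0 0 q^-1 (K1m s')
  end.

(* e_0^+ (v (x) w) = e_0^+ v (x) K_0 w + v (x) e_0^+ w ; e_0^+ x = q^-1 al y *)
Fixpoint e0p (s : seq F) : 'M[F]_(dimV s) :=
  match s return 'M[F]_(dimV s) with
  | [::] => 0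
  | al :: s' => kron2 0 0 (q^-1 * al) 0 (K0m s') + kron2 1 0 0 1 (e0p s')
  end.

(* e_1^+ y = x *)
Fixpoint e1p (s : seq F) : 'M[F]_(dimV s) :=
  match s return 'M[F]_(dimV s) with
  | [::] => 0
  | _ :: s' => kron2 0 1 0 0 (K1m s') + kron2 1 0 0 1 (e1p s')
  end.

(* e_0^- (v (x) w) = e_0^- v (x) w + K_0^{-1} v (x) e_0^- w ; e_0^- y = q al^-1 x,
   K_0^{-1} = diag(q, q^-1) on V(al) *)
Fixpoint e0m (s : seq F) : 'M[F]_(dimV s) :=
  match s return 'M[F]_(dimV s) with
  | [::] => 0
  | al :: s' => kron2 0 (q * al^-1) 0 0 1%:M + kron2 q 0 0 q^-1 (e0m s')
  end.

(* e_1^- x = y, K_1^{-1} = diag(q^-1, q) on V(al) *)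
Fixpoint e1m (s : seq F) : 'M[F]_(dimV s) :=
  match s return 'M[F]_(dimV s) with
  | [::] => 0
  | _ :: s' => kron2 0 0 1 0 1%:M + kron2 q^-1 0 0 q (e1m s')
  end.

(* the vector x (x) ... (x) x spanning U_0 *)
Fixpoint xvec (s : seq F) : 'cV[F]_(dimV s) :=
  match s return 'cV[F]_(dimV s) with
  | [::] => const_mx 1
  | _ :: s' => col_mx (xvec s') 0
  end.

Definition theta (a b c : F) (d i : nat) : F :=
  a + b * q ^ ((2 * i)%:Z - d%:Z) + c * q ^ (d%:Z - (2 * i)%:Z).

Definition Rm (u v : F) s := u *: e0p s + v *: (e1m s *m K1m s).
Definition Lm (us vs : F) s := us *: e1p s + vs *: (e0m s *m K0m s).
Definition Am (a b c u v : F) s := a%:M + b *: K0m s + c *: K1m s + Rm u v s.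
Definition Asm (a' b' c' us vs : F) s := a'%:M + b' *: K0m s + c' *: K1m s + Lm us vs s.

End Uq.

Definition Eidem (F : fieldType) n (M : 'M[F]_n) (th : nat -> F) (d i : nat) : 'M[F]_n :=
  foldr (fun j P => (th i - th j)^-1 *: ((M - (th j)%:M) *m P)) 1%:M
        [seq j <- iota 0 d.+1 | j != i].

(* Main.v *)
Require Import Defs.
From HB Require Import structures.
From mathcomp Require Import all_boot all_order all_algebra.
Import Order.TTheory GRing.Theory Num.Theory.
Local Open Scope ring_scope.
From Stdlib Require Import Ring Field Lia.
Set Implicit Arguments. Unset Strict Implicit. Unset Printing Implicit Defensive.

Section Generic.
Variable F : fieldType.
Definition Fa (x y : F) : F := x + y.
Definition Fm (x y : F) : F := x * y.
Definition Fo (x : F) : F := - x.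
Definition Fs (x y : F) : F := x - y.
Definition Fi (x : F) : F := x^-1.
Definition Fd (x y : F) : F := x / y.
Definition F0 : F := 0.
Definition F1 : F := 1.
Lemma Fring : @ring_theory (GRing.PzSemiRing.sort F) F0 F1 Fa Fm Fs Fo eq.
Proof. split=> *; rewrite /Fa/Fm/Fs/Fo/F0/F1; [exact: add0r|exact: addrC|exact: addrA|exact: mul1r|exact: mulrC|exact: mulrA|exact: mulrDl|done|exact: subrr]. Qed.
Lemma Ffield : @field_theory (GRing.PzSemiRing.sort F) F0 F1 Fa Fm Fs Fo Fd Fi eq.
Proof. split=> //; first exact: Fring. by rewrite /F0/F1; apply/eqP; rewrite oner_eq0. by move=> x /eqP; rewrite /Fm/Fi/F0/F1; exact: mulVf. Qed.
Lemma Ffield2 : @field_theory (GRing.Field.sort F) F0 F1 Fa Fm Fs Fo Fd Fi eq.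
Proof. exact: Ffield. Qed.
Add Field Ffld2 : Ffield2.
Lemma fold_ops : (forall x y : F, x + y = Fa x y) * (forall x y : F, x * y = Fm x y) *
  (forall x : F, - x = Fo x) * (forall x : F, x ^-1 = Fi x) * (0 = F0) * (1 = F1).
Proof. done. Qed.
Ltac fside := rewrite /Fa/Fm/Fs/Fo/Fi/Fd/F0/F1; repeat split; apply/eqP; rewrite ?mulf_neq0 ?expf_neq0 ?invr_neq0 ?oner_neq0 //.
Ltac rtac := rewrite ?fold_ops; match goal with |- @eq _ ?x ?y => change (@eq (GRing.Field.sort F) x y) end; ring.
Ltac fld := rewrite ?fold_ops; match goal with |- @eq _ ?x ?y => change (@eq (GRing.Field.sort F) x y) end; field; try fside.

Section G.
Variables (n : nat) (M : 'M[F]_n) (t : nat -> F) (i : nat).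
Definition G (l : seq nat) : 'M[F]_n :=
  foldr (fun j P => (t i - t j)^-1 *: ((M - (t j)%:M) *m P)) 1%:M l.

Lemma MBt_comm (a : F) : M *m (M - a%:M) = (M - a%:M) *m M.
Proof. by rewrite mulmxBr mulmxBl scalar_mxC. Qed.

Lemma G_comm l : M *m G l = G l *m M.
Proof.
elim: l => [|j l IH] /=; first by rewrite mulmx1 mul1mx.
by rewrite -scalemxAr -scalemxAl mulmxA MBt_comm -!mulmxA IH.
Qed.

Lemma G_rcons l j : G (rcons l j) = G l *m ((t i - t j)^-1 *: (M - (t j)%:M)).
Proof.
elim: l => [|j' l IH] /=; first by rewrite mulmx1 mul1mx.
by rewrite IH -scalemxAl mulmxA.
Qed.

Lemma G_rev l : G (rev l) = G l.
Proof.
elim: l => [|j l IH] //=.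
rewrite rev_cons G_rcons IH -scalemxAr; congr (_ *: _).
by rewrite mulmxBr mulmxBl -G_comm scalar_mxC.
Qed.

Lemma G_fix (w : 'cV[F]_n) l : M *m w = t i *: w ->
  (forall j, j \in l -> t i != t j) -> G l *m w = w.
Proof.
move=> Hw; elim: l => [|j l IH] Hl /=; first by rewrite mul1mx.
rewrite -scalemxAl -mulmxA IH; last by move=> j' hj'; apply: Hl; rewrite inE hj' orbT.
rewrite mulmxBl Hw mul_scalar_mx -scalerBl scalerA mulVf ?scale1r //.
by rewrite subr_eq0 Hl // inE eqxx.
Qed.
End G.

Section Grade.
Variables (n : nat) (gr : 'I_n -> nat).
Definition lowering (L : 'M[F]_n) := forall k l, L k l != 0 -> gr l = (gr k).+1.
Definition dg (tN : nat -> F) : 'M[F]_n := diag_mx (\row_k tN (gr k)).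

Lemma step_entry (N L : 'M[F]_n) tN (a : F) p (X : 'M[F]_(n, p)) k j :
  N = dg tN + L -> ((N - a%:M) *m X) k j = (tN (gr k) - a) * X k j + (L *m X) k j.
Proof.
move=> ->; rewrite mulmxBl mulmxDl mul_scalar_mx mul_diag_mx !mxE.
by rewrite mulrBl addrAC.
Qed.

Lemma lowsum (L : 'M[F]_n) p (X : 'M[F]_(n, p)) k j : lowering L ->
  (forall l, gr l = (gr k).+1 -> X l j = 0) -> (L *m X) k j = 0.
Proof.
move=> HL HX; rewrite mxE big1 // => l _.
case: (eqVneq (L k l) 0) => [->|h]; first by rewrite mul0r.
by rewrite (HX l (HL _ _ h)) mulr0.
Qed.

Variables (d : nat) (Hb : forall k, (gr k <= d)%N).

Lemma annih_step (N L : 'M[F]_n) tN m p (X : 'M[F]_(n, p)) :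
  lowering L -> N = dg tN + L -> (forall k j, (m < gr k)%N -> X k j = 0) ->
  forall k j, (m <= gr k)%N -> ((N - (tN m)%:M) *m X) k j = 0.
Proof.
move=> HL HN HX k j hk; rewrite (step_entry (tN m) X k j HN) (lowsum (X:=X) (k:=k) (j:=j) HL); last first.
  by move=> l hl; apply: HX; rewrite hl ltnS.
rewrite addr0; case: (ltngtP m (gr k)) hk => // [h|<-] _.
  by rewrite HX ?mulr0.
by rewrite subrr mul0r.
Qed.

Lemma annih (N L : 'M[F]_n) tN : lowering L -> N = dg tN + L ->
  forall e m, (m + e = d)%N -> forall k j, (m < gr k)%N -> G N tN 0 (iota m.+1 e) k j = 0.
Proof.
move=> HL HN; elim=> [|e IH] m hme k j hk /=.
  by move: (Hb k); rewrite addn0 in hme; rewrite -hme leqNgt hk.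
rewrite mxE (annih_step HL HN) ?mulr0 //.
by apply: IH; rewrite addSnnS.
Qed.

Lemma kerlow (N L : 'M[F]_n) tN p (X : 'M[F]_(n, p)) : lowering L -> N = dg tN + L ->
  (forall i, (0 < i <= d)%N -> tN i != tN 0) ->
  (N - (tN 0)%:M) *m X = 0 -> forall k j, (0 < gr k)%N -> X k j = 0.
Proof.
move=> HL HN Ht HX.
suff H : forall e k j, (d - gr k <= e)%N -> (0 < gr k)%N -> X k j = 0.
  by move=> k j; apply: (H (d - gr k)%N).
elim=> [|e IH] k j he hk.
  have E := step_entry (tN 0) X k j HN; rewrite HX mxE (lowsum (X:=X) (k:=k) (j:=j) HL) in E; last first.
    move=> l hl; move: (Hb l) (Hb k) he; rewrite hl => h1 h2 h3.
    exfalso; move: h1 h2 h3 => /ssrnat.leP h1 /ssrnat.leP h2 /ssrnat.leP h3; rewrite ?subnE in h1 h2 h3; lia.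
  move/esym: E; rewrite addr0 => /eqP; rewrite mulf_eq0 subr_eq0 (negbTE (Ht _ _)) //=.
    by move/eqP.
  by rewrite hk Hb.
have E := step_entry (tN 0) X k j HN; rewrite HX mxE (lowsum (X:=X) (k:=k) (j:=j) HL) in E; last first.
  move=> l hl; apply: IH; last by rewrite hl.
  by move: he (Hb l) (Hb k); rewrite hl => /ssrnat.leP h1 /ssrnat.leP h2 /ssrnat.leP h3; apply/ssrnat.leP; rewrite ?subnE in h1 h2 h3 *; lia.
move/esym: E; rewrite addr0 => /eqP; rewrite mulf_eq0 subr_eq0 (negbTE (Ht _ _)) //=.
  by move/eqP.
by rewrite hk Hb.
Qed.


Definition raising (R : 'M[F]_n) := forall k l, R k l != 0 -> gr k = (gr l).+1.

Variables (k0 : 'I_n) (Hk0 : gr k0 = 0) (Huniq : forall k, gr k = 0 -> k = k0)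
  (w : 'cV[F]_n) (Hw : forall k, w k 0 = (gr k == 0)%:R).

Lemma wE k : w k 0 = (k == k0)%:R.
Proof.
rewrite Hw; case: (eqVneq k k0) => [->|h]; first by rewrite Hk0.
by case: (eqVneq (gr k) 0) => // /Huniq; move/eqP: h.
Qed.

Lemma mulw_entry m (X : 'M[F]_(m, n)) i : (X *m w) i 0 = X i k0.
Proof.
rewrite mxE (bigD1 k0) //= wE eqxx mulr1 big1 ?addr0 // => l hl.
by rewrite wE (negbTE hl) mulr0.
Qed.

Lemma wmul_entry m (X : 'M[F]_(1, m)) j : (w *m X) k0 j = X 0 j.
Proof. by rewrite mxE big_ord1 wE eqxx mul1r. Qed.

Lemma wmul_inj m (X Y : 'M[F]_(1, m)) : w *m X = w *m Y -> X = Y.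
Proof.
move=> h; apply/matrixP => i j; rewrite (ord1 i) -!wmul_entry; by rewrite h.
Qed.

Lemma dg_w t : dg t *m w = t 0%N *: w.
Proof.
apply/matrixP => k j; rewrite (ord1 j) mul_diag_mx !mxE wE.
by case: (eqVneq k k0) => [->|_]; rewrite ?Hk0 ?mulr0.
Qed.

Lemma low_w L : lowering L -> L *m w = 0.
Proof.
move=> HL; apply/matrixP => k j; rewrite (ord1 j) mulw_entry mxE.
by case: (eqVneq (L k k0) 0) => // /HL; rewrite Hk0.
Qed.

Lemma main_gen (N L A R : 'M[F]_n) tN tA z :
  (0 < d)%N -> lowering L -> N = dg tN + L -> raising R -> A = dg tA + R ->
  (forall i, (0 < i <= d)%N -> tN i != tN 0) -> L *m R *m w = z *: w ->
  G N tN 0 (iota 1 d) *m A *m G N tN 0 (iota 1 d) =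
    (tA 0%N + z / (tN 0%N - tN 1%N)) *: G N tN 0 (iota 1 d).
Proof.
move=> d0 HL HN HR HA Ht HLR.
set E := G N tN 0 (iota 1 d).
have Esupp : forall k j, (0 < gr k)%N -> E k j = 0.
  by move=> k j; apply: (annih HL HN); rewrite add0n.
have HNE : (N - (tN 0%N)%:M) *m E = 0.
  by apply/matrixP => k j; rewrite (annih_step HL HN Esupp) ?mxE.
set f := row k0 E.
have Eform : E = w *m f.
  apply/matrixP => k j; rewrite mxE big_ord1 wE mxE.
  case: (eqVneq k k0) => [->|h]; first by rewrite mul1r.
  rewrite mul0r Esupp // lt0n; apply/negP => /eqP /Huniq; exact/eqP.
have Nw : N *m w = tN 0%N *: w by rewrite HN mulmxDl dg_w low_w // addr0.
have Ew : E *m w = w.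
  apply: G_fix => // j; rewrite mem_iota => /andP [h1 h2].
  by rewrite eq_sym Ht // h1 -ltnS -(add1n d).
have fw : f *m w = 1%:M.
  by apply: wmul_inj; rewrite mulmxA -Eform Ew mulmx1.
have NE : N *m E = tN 0%N *: E.
  by apply/eqP; rewrite -subr_eq0 -mul_scalar_mx -mulmxBl HNE.
have fN : f *m N = tN 0%N *: f.
  by apply: wmul_inj; rewrite mulmxA -Eform -G_comm NE Eform scalemxAr.
have Aw : A *m w = tA 0%N *: w + R *m w by rewrite HA mulmxDl dg_w.
have NRw : N *m (R *m w) = tN 1%N *: (R *m w) + z *: w.
  rewrite HN mulmxDl [L *m _]mulmxA HLR; congr (_ + _).
  apply/matrixP => k j; rewrite (ord1 j) mul_diag_mx mxE [RHS]mxE mulw_entry mxE.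
  case: (eqVneq (R k k0) 0) => [->|h]; first by rewrite !mulr0.
  by rewrite (HR _ _ h) Hk0.
have t01 : tN 0%N - tN 1%N != 0 by rewrite subr_eq0 eq_sym Ht.
set x := (f *m (R *m w)) 0 0.
have hx : tN 0%N * x = tN 1%N * x + z.
  have := congr1 (fun M : 'M[F]_1 => M 0 0) (congr1 (mulmx f) NRw).
  rewrite mulmxA fN -scalemxAl !mulmxDr -!scalemxAr fw.
  rewrite (mx11_scalar (f *m (R *m w))) -/x !mxE /= !mulr1n.
  by move=> ->; rewrite mulr1.
have xv : x = z / (tN 0%N - tN 1%N).
  have h : (tN 0%N - tN 1%N) * x = z by rewrite mulrBl hx addrAC subrr add0r.
  by rewrite -h [(_ * x)]mulrC mulfK.
have key : f *m (A *m w) = (tA 0%N + z / (tN 0%N - tN 1%N))%:M.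
  rewrite Aw mulmxDr -scalemxAr fw (mx11_scalar (f *m (R *m w))) -/x xv.
  by rewrite scalemx1 raddfD.
rewrite Eform.
have -> : w *m f *m A *m (w *m f) = w *m (f *m (A *m w)) *m f by rewrite !mulmxA.
by rewrite key mul_mx_scalar scalemxAl.
Qed.

End Grade.

Section Conc.
Variables (q : F).
Hypothesis Hq : q != 0.

Fixpoint gr (s : seq F) : 'I_(dimV s) -> nat :=
  match s return 'I_(dimV s) -> nat with
  | [::] => fun _ => 0%N
  | _ :: s' => fun k => match fintype.split k with inl k' => @gr s' k' | inr k' => (@gr s' k').+1 end
  end.

Arguments gr : clear implicits.

Lemma grL al s k : gr (al :: s) (lshift _ k) = gr s k.
Proof. by rewrite /= (unsplitK (inl k)). Qed.
Lemma grR al s k : gr (al :: s) (rshift _ k) = (gr s k).+1.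
Proof. by rewrite /= (unsplitK (inr k)). Qed.

Arguments gr : simpl never.
Arguments dimV : simpl never.

Lemma gr_le s k : (gr s k <= size s)%N.
Proof.
elim: s k => [|al s IH] k //=; rewrite -(@splitK _ _ k); case: (fintype.split k) => k' /=.
  by rewrite grL ltnW // ltnS IH.
by rewrite grR ltnS IH.
Qed.

Fixpoint i0 (s : seq F) : 'I_(dimV s) :=
  match s return 'I_(dimV s) with [::] => ord0 | _ :: s' => lshift _ (i0 s') end.
Fixpoint iD (s : seq F) : 'I_(dimV s) :=
  match s return 'I_(dimV s) with [::] => ord0 | _ :: s' => rshift _ (iD s') end.
Fixpoint yvec (s : seq F) : 'cV[F]_(dimV s) :=
  match s return 'cV[F]_(dimV s) with
  | [::] => const_mx 1
  | _ :: s' => col_mx 0 (yvec s')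
  end.

Arguments i0 : clear implicits.
Arguments iD : clear implicits.
Arguments yvec : clear implicits.

Lemma gr_i0 s : gr s (i0 s) = 0%N.
Proof. by elim: s => [|al s IH] //=; rewrite grL. Qed.
Lemma gr_iD s : gr s (iD s) = size s.
Proof. by elim: s => [|al s IH] //=; rewrite grR IH. Qed.

Lemma i0_uniq s k : gr s k = 0%N -> k = i0 s.
Proof.
elim: s k => [|al s IH] k /=; first by rewrite (ord1 k).
rewrite -(@splitK _ _ k); case: (fintype.split k) => k' /=.
  by rewrite grL => /IH ->.
by rewrite grR.
Qed.

Lemma iD_uniq s k : gr s k = size s -> k = iD s.
Proof.
elim: s k => [|al s IH] k /=; first by rewrite (ord1 k).
rewrite -(@splitK _ _ k); case: (fintype.split k) => k' /=.
  rewrite grL => h; move: (gr_le k'); by rewrite h ltnn.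
by rewrite grR => -[/IH ->].
Qed.

Lemma xvecE s k : xvec s k 0 = (gr s k == 0%N)%:R.
Proof.
elim: s k => [|al s IH] k /=; first by rewrite mxE.
rewrite -(@splitK _ _ k); case: (fintype.split k) => k' /=.
  by rewrite grL col_mxEu IH.
by rewrite grR col_mxEd mxE.
Qed.

Lemma yvecE s k : yvec s k 0 = (gr s k == size s)%:R.
Proof.
elim: s k => [|al s IH] k /=; first by rewrite mxE.
rewrite -(@splitK _ _ k); case: (fintype.split k) => k' /=.
  rewrite grL col_mxEu mxE; case: eqP => // h.
  by move: (gr_le k'); rewrite h ltnn.
by rewrite grR col_mxEd IH.
Qed.

Section K.
Variables (n : nat) (a b c d : F) (B : 'M[F]_n) (i j : 'I_n).
Lemma kLL : kron2 a b c d B (lshift n i) (lshift n j) = a * B i j.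
Proof. by rewrite /kron2 block_mxEul mxE. Qed.
Lemma kLR : kron2 a b c d B (lshift n i) (rshift n j) = b * B i j.
Proof. by rewrite /kron2 block_mxEur mxE. Qed.
Lemma kRL : kron2 a b c d B (rshift n i) (lshift n j) = c * B i j.
Proof. by rewrite /kron2 block_mxEdl mxE. Qed.
Lemma kRR : kron2 a b c d B (rshift n i) (rshift n j) = d * B i j.
Proof. by rewrite /kron2 block_mxEdr mxE. Qed.
End K.

Definition kE := (kLL, kLR, kRL, kRR, grL, grR, eq_lshift, eq_rshift, eq_lrshift, eq_rlshift).

Lemma K0E s k l : K0m q s k l = if k == l then q ^+ (2 * gr s k) / q ^+ size s else 0.
Proof.
elim: s k l => [|al s IH] k l /=.
  by rewrite mxE (ord1 k) (ord1 l) /= expr0 divr1.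
rewrite -(@splitK _ _ k) -(@splitK _ _ l); case: (fintype.split k) => k'; case: (fintype.split l) => l' /=;
  rewrite !kE ?mul0r // IH; case: eqP => [->|_]; rewrite ?mulr0 //.
  by rewrite exprS invfM mulrCA.
rewrite mulnS exprD expr2 [q ^+ (size s).+1]exprS. by fld.
Qed.

Lemma K1E s k l : K1m q s k l = if k == l then q ^+ size s / q ^+ (2 * gr s k) else 0.
Proof.
elim: s k l => [|al s IH] k l /=.
  by rewrite mxE (ord1 k) (ord1 l) /= expr0 divr1.
rewrite -(@splitK _ _ k) -(@splitK _ _ l); case: (fintype.split k) => k'; case: (fintype.split l) => l' /=;
  rewrite !kE ?mul0r // IH; case: eqP => [->|_]; rewrite ?mulr0 //.
  rewrite [q ^+ (size s).+1]exprS; by fld.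
rewrite mulnS exprD expr2 [q ^+ (size s).+1]exprS; by fld.
Qed.

Lemma dg_of n (g : 'I_n -> nat) (M : 'M[F]_n) t :
  (forall k l, M k l = if k == l then t (g k) else 0) -> M = dg g t.
Proof.
move=> H; apply/matrixP => k l; rewrite H !mxE.
by case: eqP => [->|_]; rewrite ?mulr1n ?mulr0n.
Qed.

Lemma K0dg s : K0m q s = dg (gr s) (fun i => q ^+ (2 * i) / q ^+ size s).
Proof. by apply: dg_of => k l; rewrite K0E. Qed.
Lemma K1dg s : K1m q s = dg (gr s) (fun i => q ^+ size s / q ^+ (2 * i)).
Proof. by apply: dg_of => k l; rewrite K1E. Qed.

Section LowRaise.
Variables (n : nat) (g : 'I_n -> nat).
Lemma low_add (A B : 'M[F]_n) : lowering g A -> lowering g B -> lowering g (A + B).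
Proof.
move=> hA hB k l; rewrite mxE; case: (eqVneq (A k l) 0) => [->|h _]; last exact: hA.
by rewrite add0r; apply: hB.
Qed.
Lemma low_scale a (A : 'M[F]_n) : lowering g A -> lowering g (a *: A).
Proof. by move=> hA k l; rewrite mxE mulf_eq0 negb_or => /andP [_ /hA]. Qed.
Lemma low_dg (A : 'M[F]_n) t : lowering g A -> lowering g (A *m dg g t).
Proof. by move=> hA k l; rewrite mul_mx_diag mxE mulf_eq0 negb_or => /andP [/hA]. Qed.
Lemma raise_add (A B : 'M[F]_n) : raising g A -> raising g B -> raising g (A + B).
Proof.
move=> hA hB k l; rewrite mxE; case: (eqVneq (A k l) 0) => [->|h _]; last exact: hA.
by rewrite add0r; apply: hB.
Qed.
Lemma raise_scale a (A : 'M[F]_n) : raising g A -> raising g (a *: A).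
Proof. by move=> hA k l; rewrite mxE mulf_eq0 negb_or => /andP [_ /hA]. Qed.
Lemma raise_dg (A : 'M[F]_n) t : raising g A -> raising g (A *m dg g t).
Proof. by move=> hA k l; rewrite mul_mx_diag mxE mulf_eq0 negb_or => /andP [/hA]. Qed.
End LowRaise.

Ltac split2 k l := rewrite -(@splitK _ _ k) -(@splitK _ _ l);
  case: (fintype.split k) => kk; case: (fintype.split l) => ll /=.

Lemma e0p_raise s : raising (gr s) (e0p q s).
Proof.
elim: s => [|al s IH] k l /=; first by rewrite mxE eqxx.
split2 k l; rewrite mxE !kE ?mul0r ?mul1r ?add0r ?addr0 ?eqxx //; try exact: IH.
  by rewrite K0E; case: (eqVneq kk ll) => [->|_]; rewrite ?mulr0 ?eqxx.
by move/IH => ->.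
Qed.

Lemma e1m_raise s : raising (gr s) (e1m q s).
Proof.
elim: s => [|al s IH] k l /=; first by rewrite mxE eqxx.
split2 k l; rewrite mxE !kE ?mul0r ?mul1r ?add0r ?addr0 ?eqxx //.
- by rewrite mulf_eq0 negb_or => /andP [_ /IH].
- by rewrite mxE; case: (eqVneq kk ll) => [->|_]; rewrite ?mulr0n ?eqxx.
- by rewrite mulf_eq0 negb_or => /andP [_ /IH ->].
Qed.

Lemma e1p_low s : lowering (gr s) (e1p q s).
Proof.
elim: s => [|al s IH] k l /=; first by rewrite mxE eqxx.
split2 k l; rewrite mxE !kE ?mul0r ?mul1r ?add0r ?addr0 ?eqxx //; try exact: IH.
  by rewrite K1E; case: (eqVneq kk ll) => [->|_]; rewrite ?mulr0 ?eqxx.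
by move/IH => ->.
Qed.

Lemma e0m_low s : lowering (gr s) (e0m q s).
Proof.
elim: s => [|al s IH] k l /=; first by rewrite mxE eqxx.
split2 k l; rewrite mxE !kE ?mul0r ?mul1r ?add0r ?addr0 ?eqxx //.
- by rewrite mulf_eq0 negb_or => /andP [_ /IH].
- by rewrite mxE; case: (eqVneq kk ll) => [->|_]; rewrite ?mulr0n ?mulr0 ?eqxx.
- by rewrite mulf_eq0 negb_or => /andP [_ /IH ->].
Qed.

Lemma Rm_raise u v s : raising (gr s) (Rm q u v s).
Proof.
apply: raise_add; apply: raise_scale; first exact: e0p_raise.
rewrite K1dg; apply: raise_dg; exact: e1m_raise.
Qed.

Lemma Lm_low u v s : lowering (gr s) (Lm q u v s).
Proof.
apply: low_add; apply: low_scale; first exact: e1p_low.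
rewrite K0dg; apply: low_dg; exact: e0m_low.
Qed.

Lemma zpow m k : q ^ (m%:Z - k%:Z) = q ^+ m / q ^+ k.
Proof. by rewrite expfzDr // -invr_expz. Qed.

Lemma theta_nat a b c d i :
  theta q a b c d i = a + b * (q ^+ (2 * i) / q ^+ d) + c * (q ^+ d / q ^+ (2 * i)).
Proof. by rewrite /theta !zpow. Qed.

Lemma Ddg a b c s : a%:M + b *: K0m q s + c *: K1m q s = dg (gr s) (theta q a b c (size s)).
Proof.
apply: dg_of => k l; rewrite !mxE K0E K1E theta_nat.
by case: eqP => _; rewrite ?mulr1n ?mulr0n ?mulr0 ?addr0.
Qed.

Lemma Am_dg a b c u v s : Am q a b c u v s = dg (gr s) (theta q a b c (size s)) + Rm q u v s.
Proof. by rewrite /Am Ddg. Qed.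
Lemma Asm_dg a b c u v s : Asm q a b c u v s = dg (gr s) (theta q a b c (size s)) + Lm q u v s.
Proof. by rewrite /Asm Ddg. Qed.

Lemma Rm_cons u v al s : Rm q u v (al :: s) =
  block_mx (Rm q u v s) 0 ((u * q^-1 * al) *: K0m q s + (v * q) *: K1m q s) (Rm q u v s).
Proof.
rewrite /Rm /= /kron2 !add_block_mx mulmx_block !scale_block_mx add_block_mx.
rewrite !scale0r !scale1r !add0r !addr0 !mul0mx !mulmx0 !addr0 !add0r.
congr block_mx.
- by rewrite -scalemxAl -scalemxAr [q^-1 *: _]scalerA mulVf // scale1r.
- by rewrite !scaler0 addr0.
- by rewrite mul1mx !scalerA mulrA.
- by rewrite -scalemxAl -scalemxAr [q *: _]scalerA mulfV // scale1r.
Qed.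

Lemma Lm_cons u v al s : Lm q u v (al :: s) =
  block_mx (Lm q u v s) (u *: K1m q s + (v * q ^+ 2 / al) *: K0m q s) 0 (Lm q u v s).
Proof.
rewrite /Lm /= /kron2 !add_block_mx mulmx_block !scale_block_mx add_block_mx.
rewrite !scale0r !scale1r !add0r !addr0 !mul0mx !mulmx0 !addr0 !add0r.
congr block_mx.
- by rewrite -scalemxAl -scalemxAr [q *: _]scalerA mulfV // scale1r.
- rewrite -scalemxAl mul1mx !scalerA; congr (_ + _ *: _).
  by rewrite -mulrA mulrAC -expr2 mulrA.
- by rewrite !scaler0 addr0.
- by rewrite -scalemxAl -scalemxAr [q^-1 *: _]scalerA mulVf // scale1r.
Qed.

Definition grf (s : seq F) (k : 'I_(dimV s)) := (size s - gr s k)%N.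

Lemma grf_iD s : grf (iD s) = 0%N.
Proof. by rewrite /grf gr_iD subnn. Qed.
Lemma grf_uniq s (k : 'I_(dimV s)) : grf k = 0%N -> k = iD s.
Proof.
rewrite /grf => /eqP; rewrite subn_eq0 => h; apply: iD_uniq.
by apply/eqP; rewrite eqn_leq h gr_le.
Qed.
Lemma yvecE' s (k : 'I_(dimV s)) : yvec s k 0 = (grf k == 0%N)%:R.
Proof. by rewrite yvecE /grf subn_eq0 eqn_leq gr_le. Qed.
Lemma grf_le s (k : 'I_(dimV s)) : (grf k <= size s)%N.
Proof. exact: leq_subr. Qed.

Lemma low_flip s (M : 'M[F]_(dimV s)) : raising (gr s) M -> lowering (@grf s) M.
Proof.
move=> h k l /h; rewrite /grf => e; move: (gr_le k) (gr_le l); rewrite e.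
move=> /ssrnat.leP h1 /ssrnat.leP h2; rewrite ?subnE; lia.
Qed.
Lemma raise_flip s (M : 'M[F]_(dimV s)) : lowering (gr s) M -> raising (@grf s) M.
Proof.
move=> h k l /h; rewrite /grf => e; move: (gr_le k) (gr_le l); rewrite e.
move=> /ssrnat.leP h1 /ssrnat.leP h2; rewrite ?subnE; lia.
Qed.
Lemma dg_flip s t : dg (gr s) t = dg (@grf s) (fun i => t (size s - i)%N).
Proof. by apply/matrixP => k l; rewrite !mxE /grf subKn ?gr_le. Qed.

Lemma xK0 s : K0m q s *m xvec s = (q ^+ size s)^-1 *: xvec s.
Proof. by rewrite K0dg (dg_w (gr_i0 s) (@i0_uniq s) (@xvecE s)) muln0 expr0 mul1r. Qed.
Lemma xK1 s : K1m q s *m xvec s = q ^+ size s *: xvec s.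
Proof. by rewrite K1dg (dg_w (gr_i0 s) (@i0_uniq s) (@xvecE s)) muln0 expr0 divr1. Qed.
Lemma yK0 s : K0m q s *m yvec s = q ^+ size s *: yvec s.
Proof.
rewrite K0dg dg_flip (dg_w (grf_iD s) (@grf_uniq s) (@yvecE' s)) subn0.
by rewrite mul2n -addnn exprD mulfK // expf_neq0.
Qed.
Lemma yK1 s : K1m q s *m yvec s = (q ^+ size s)^-1 *: yvec s.
Proof.
rewrite K1dg dg_flip (dg_w (grf_iD s) (@grf_uniq s) (@yvecE' s)) subn0.
by rewrite mul2n -addnn exprD invfM mulrA mulfV ?mul1r // expf_neq0.
Qed.
Lemma Lx u v s : Lm q u v s *m xvec s = 0.
Proof. exact: (low_w (gr_i0 s) (@i0_uniq s) (@xvecE s) (@Lm_low u v s)). Qed.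
Lemma Ry u v s : Rm q u v s *m yvec s = 0.
Proof. exact: (low_w (grf_iD s) (@grf_uniq s) (@yvecE' s) (low_flip (@Rm_raise u v s))). Qed.

Lemma xvec_cons (al : F) (s : seq F) : xvec (al :: s) = col_mx (xvec s) 0.
Proof. by []. Qed.
Lemma yvec_cons (al : F) (s : seq F) : yvec (al :: s) = col_mx 0 (yvec s).
Proof. by []. Qed.

Fixpoint Z1 (u v us vs : F) (s : seq F) : F :=
  match s with
  | [::] => 0
  | al :: s' => Z1 u v us vs s' +
      (us * q ^+ size s' + vs * q ^+ 2 / al / q ^+ size s') *
      (u * q^-1 * al / q ^+ size s' + v * q * q ^+ size s')
  end.
Fixpoint Z2 (u v us vs : F) (s : seq F) : F :=
  match s with
  | [::] => 0
  | al :: s' => Z2 u v us vs s' +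
      (us / q ^+ size s' + vs * q ^+ 2 / al * q ^+ size s') *
      (u * q^-1 * al * q ^+ size s' + v * q / q ^+ size s')
  end.

Lemma LRx u v us vs s :
  Lm q us vs s *m (Rm q u v s *m xvec s) = Z1 u v us vs s *: xvec s.
Proof.
elim: s => [|al s IH].
  by rewrite /Rm /= scaler0 mul0mx scaler0 addr0 mul0mx mulmx0 scale0r.
have Rx : Rm q u v (al :: s) *m xvec (al :: s) =
   col_mx (Rm q u v s *m xvec s)
     ((u * q^-1 * al / q ^+ size s + v * q * q ^+ size s) *: xvec s).
  rewrite Rm_cons xvec_cons mul_block_col !mulmx0 !addr0 (mulmxDl ((u * q^-1 * al) *: K0m q s)) -!scalemxAl xK0 xK1.
  by rewrite !scalerA -scalerDl.
rewrite Rx Lm_cons xvec_cons mul_block_col mul0mx add0r.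
rewrite -[Lm q us vs s *m (_ *: xvec s)]scalemxAr Lx scaler0 IH.
rewrite -scalemxAr (mulmxDl (us *: K1m q s)) -!scalemxAl xK0 xK1 !scalerA -!scalerDl.
rewrite scale_col_mx scaler0 /=; rewrite scalerA -scalerDl; congr (col_mx (_ *: _) _).
by rtac.
Qed.

Lemma RLy u v us vs s :
  Rm q u v s *m (Lm q us vs s *m yvec s) = Z2 u v us vs s *: yvec s.
Proof.
elim: s => [|al s IH].
  by rewrite /Lm /= scaler0 mul0mx scaler0 addr0 mul0mx mulmx0 scale0r.
have Ly : Lm q us vs (al :: s) *m yvec (al :: s) =
   col_mx ((us / q ^+ size s + vs * q ^+ 2 / al * q ^+ size s) *: yvec s)
     (Lm q us vs s *m yvec s).
  rewrite Lm_cons yvec_cons mul_block_col mulmx0 add0r mul0mx add0r.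
  rewrite (mulmxDl (us *: K1m q s)) -!scalemxAl yK0 yK1.
  by rewrite !scalerA -scalerDl.
rewrite Ly Rm_cons yvec_cons mul_block_col mul0mx addr0.
rewrite -[Rm q u v s *m (_ *: yvec s)]scalemxAr Ry scaler0 IH.
rewrite -scalemxAr (mulmxDl ((u * q^-1 * al) *: K0m q s)) -!scalemxAl yK0 yK1 !scalerA -!scalerDl.
rewrite scale_col_mx scaler0 /= scalerA -scalerDl.
by rewrite addrC.
Qed.

Definition Sf (n : nat) : F :=
  q * (q * q + 1 - q * q / (q ^+ n * q ^+ n) - q ^+ n * q ^+ n) / (q * q - 1).

Lemma Zdiff u v us vs s : q * q - 1 != 0 -> all (fun al => al != 0) s ->
  Z2 u v us vs s - Z1 u v us vs s = (v * us - u * vs) * Sf (size s).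
Proof.
move=> hq2; elim: s => [|al s IH] /=.
  by move=> _; rewrite /Sf expr0 !mul1r; fld.
move=> /andP [hal hs]; rewrite opprD addrACA IH // /Sf [q ^+ (size s).+1]exprS ?expr2.
have hn : q ^+ size s != 0 by rewrite expf_neq0.
move: (q ^+ size s) hn => Q hQ.
by fld.
Qed.

Lemma pow2 n : q ^+ (2 * n) = q ^+ n * q ^+ n.
Proof. by rewrite mul2n -addnn exprD. Qed.

Lemma core_id a b c a' b' c' u v us vs e : q * q - 1 != 0 ->
  u * vs = - (b * b' * q^-1 * (q - q^-1) ^+ 2) ->
  v * us = - (c * c' * q^-1 * (q - q^-1) ^+ 2) ->
  (v * us - u * vs) * Sf e.+1 =
  (theta q a' b' c' e.+1 e.+1 - theta q a' b' c' e.+1 1) *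
    (theta q a b c e.+1 e - theta q a b c e.+1 e.+1) +
  (theta q a' b' c' e.+1 0 - theta q a' b' c' e.+1 1) *
    (theta q a b c e.+1 0 - theta q a b c e.+1 e).
Proof.
move=> hq2 h1 h2; rewrite h1 h2 !theta_nat !pow2 /Sf !exprS !expr0 !mulr1.
have hn : q ^+ e != 0 by rewrite expf_neq0.
move: (q ^+ e) hn => Q hQ.
by fld.
Qed.
End Conc.

Lemma fin_alg (Sd S1 S0 Td Te T0 z1 z2 : F) : Te - Td != 0 -> Td - Te != 0 ->
  z2 - z1 = (Sd - S1) * (Te - Td) + (S0 - S1) * (T0 - Te) ->
  Sd + z2 / (Td - Te) = S1 - (z1 + (S0 - S1) * (T0 - Te)) / (Te - Td).
Proof.
move=> hD hD' h.
have -> : z2 = z1 + ((Sd - S1) * (Te - Td) + (S0 - S1) * (T0 - Te)) by rewrite -h addrC subrK.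
by fld.
Qed.

Lemma Eidem_G n (M : 'M[F]_n) t d i : Eidem M t d i = G M t i [seq j <- iota 0 d.+1 | j != i].
Proof. by []. Qed.

Lemma filter0 d : [seq j <- iota 0 d.+1 | j != 0%N] = iota 1 d.
Proof.
rewrite /= ; apply/all_filterP/allP => j; rewrite mem_iota => /andP [h _].
by rewrite -lt0n.
Qed.

Lemma filterd d : [seq j <- iota 0 d.+1 | j != d] = iota 0 d.
Proof.
rewrite -addn1 iotaD filter_cat /= ?add0n eqxx cats0.
apply/all_filterP/allP => j; rewrite mem_iota ?add0n => /andP [_ h].
by rewrite neq_ltn h.
Qed.

Lemma rev_iota_map d : map (fun j => d - j)%N (iota 1 d) = rev (iota 0 d).
Proof.
apply: (@eq_from_nth _ 0%N); first by rewrite size_map size_rev !size_iota.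
move=> i; rewrite size_map size_iota => hi.
rewrite (nth_map 0%N) ?size_iota // nth_rev ?size_iota // !nth_iota //.
by apply/ssrnat.ltP; move/ssrnat.ltP: hi; rewrite ?subnE; lia.
Qed.

Lemma G_map n (M : 'M[F]_n) t i i' f l : t (f i') = t i ->
  G M t i (map f l) = G M (fun j => t (f j)) i' l.
Proof. by move=> h; elim: l => [|j l IH] //=; rewrite IH h. Qed.
End Generic.

Theorem lemma9p8 (F : closedFieldType) (d : nat)
  (q a b c a' b' c' u v us vs zeta1 : F) (alpha : seq F) :
  size alpha = d -> (0 < d)%N ->
  q != 0 -> b != 0 -> c != 0 -> b' != 0 -> c' != 0 ->
  q ^+ 2 != 1 -> q ^+ 2 != -1 ->
  (forall i j : nat, (i <= d)%N -> (j <= d)%N ->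
     theta q a b c d i = theta q a b c d j -> i = j) ->
  (forall i j : nat, (i <= d)%N -> (j <= d)%N ->
     theta q a' b' c' d i = theta q a' b' c' d j -> i = j) ->
  all (fun al => al != 0) alpha ->
  u * vs = - (b * b' * q^-1 * (q - q^-1) ^+ 2) ->
  v * us = - (c * c' * q^-1 * (q - q^-1) ^+ 2) ->
  (* zeta1 is the scalar by which LR acts on U_0 *)
  (Lm q us vs alpha *m Rm q u v alpha) *m xvec alpha = zeta1 *: xvec alpha ->
  let th := theta q a b c d in
  let ths := theta q a' b' c' d in
  let A := Am q a b c u v alpha in
  let As := Asm q a' b' c' us vs alpha in
  let E := Eidem A th d in
  let Es := Eidem As ths d in
  Es 0%N *m A *m Es 0%N = (th 0%N + zeta1 / (ths 0%N - ths 1%N)) *: Es 0%N /\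
  E d *m As *m E d =
    (ths 1%N - (zeta1 + (ths 0%N - ths 1%N) * (th 0%N - th d.-1))
               / (th d.-1 - th d)) *: E d.
Proof.
move=> hsz d0 hq hb hc hb' hc' hq2 hq2' inj inj' hal huv hvu hz th ths A As E Es.
subst d; set s := alpha in hal huv hvu hz th ths A As E Es *.
have Ht : forall i, (0 < i <= size s)%N -> ths i != ths 0%N.
  move=> i /andP [h1 h2]; apply/eqP => /(inj' _ _ h2 (leq0n _)) h.
  by rewrite h in h1.
split.
  rewrite /Es Eidem_G filter0.
  apply: (main_gen (@gr_le _ s) (gr_i0 s) (@i0_uniq _ s) (@xvecE _ s) d0
    (@Lm_low _ q hq us vs s) (@Asm_dg _ q hq a' b' c' us vs s) (@Rm_raise _ q hq u v s)
    (@Am_dg _ q hq a b c u v s) Ht hz).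
have hq2m : q * q - 1 != 0 by rewrite -expr2 subr_eq0.
have zeq : zeta1 = Z1 q u v us vs s.
  move: hz; rewrite -mulmxA (LRx hq) => /(congr1 (fun M : 'M[F]_(_, 1) => M (i0 s) 0)).
  by rewrite !mxE xvecE gr_i0 eqxx /= !mulr1 => ->.
have Ht' : forall i, (0 < i <= size s)%N -> th (size s - i)%N != th (size s - 0)%N.
  move=> i /andP [h1 h2]; apply/eqP => /(inj _ _ (leq_subr _ _) (leq_subr _ _)) h.
  move: h; rewrite subn0 => /eqP; rewrite -{2}(subn0 (size s)) eqn_sub2lE // => /eqP h.
  by rewrite h in h1.
have HN : A = dg (@grf _ s) (fun i => th (size s - i)%N) + Rm q u v s.
  by rewrite /A (Am_dg hq) (@dg_flip _ s).
have HA : As = dg (@grf _ s) (fun i => ths (size s - i)%N) + Lm q us vs s.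
  by rewrite /As (Asm_dg hq) (@dg_flip _ s).
have HLR : Rm q u v s *m Lm q us vs s *m yvec s = Z2 q u v us vs s *: yvec s.
  by rewrite -mulmxA (RLy hq).
rewrite /E Eidem_G filterd -G_rev -rev_iota_map (@G_map _ _ _ _ _ 0%N); last by rewrite subn0.
rewrite (main_gen (@grf_le _ s) (grf_iD s) (@grf_uniq _ s) (@yvecE' _ s) d0
    (low_flip (@Rm_raise _ q hq u v s)) HN (raise_flip (@Lm_low _ q hq us vs s)) HA Ht' HLR).
congr (_ *: _); rewrite !subn0 subn1 zeq.
have zd := @Zdiff _ q hq u v us vs s hq2m hal.
have ci := @core_id _ q hq a b c a' b' c' u v us vs (size s).-1 hq2m huv hvu.
rewrite prednK // in ci.
have hTe : th (size s).-1 != th (size s).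
  apply/eqP => /(inj _ _ (leq_pred _) (leqnn _)) h.
  move: d0 h; case: (size s) => [//|n] _ /= h; by move/eqP: h; rewrite eqn_leq ltnn andbF.
apply: fin_alg; first by rewrite subr_eq0.
  by rewrite subr_eq0 eq_sym.
by rewrite zd ci.
Qed.
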